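(* For $n\geq 1$, $$P^{(\mathsf{cros}, \mathsf{exc}, \mathsf{fix})}(\mathfrak{S}_n(321); q, tq, r)=\left(\frac{1+xt}{1+x}\right)^{n}P^{(\mathsf{cros}, \mathsf{cpk}, \mathsf{exc}, \mathsf{fix})}\left(\mathfrak{S}_n(321); q, \frac{(1+x)^{2}t}{(x+t)(1+xt)},\frac{q(x+t)}{1+xt}, \frac{(1+x)r}{1+xt}\right),$$ equivalently, $$P^{(\mathsf{cros}, \mathsf{cpk}, \mathsf{exc}, \mathsf{fix})}(\mathfrak{S}_n(321); q, x, qt, r)=\left(\frac{1+u}{1+uv}\right)^{n}P^{(\mathsf{cros}, \mathsf{exc}, \mathsf{fix})}\left(\mathfrak{S}_n(321); q, qv, \frac{(1+uv)r}{1+u}\right),$$ where $u=\frac{1+t^{2}-2xt-(1-t)\sqrt{(1+t)^{2}-4xt}}{2(1-x)t}$ and $v=\frac{(1+t)^{2}-2xt-(1+t)\sqrt{(1+t)^{2}-4xt}}{2xt}$.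
   Context: $\mathfrak{S}_n(321)$ is the set of permutations of $[n]$ avoiding the pattern $321$. $P^{(\mathsf{stat}_1,\ldots,\mathsf{stat}_m)}(\Omega;t_1,\ldots,t_m)=\sum_{\sigma\in\Omega}\prod_jt_j^{\mathsf{stat}_j\sigma}$. $\mathsf{exc}\,\sigma=\#\{i:\sigma(i)>i\}$, $\mathsf{fix}\,\sigma=\#\{i:\sigma(i)=i\}$, $\mathsf{cpk}\,\sigma=\#\{x:\sigma^{-1}(x)<x>\sigma(x)\}$, $\mathsf{cros}\,\sigma=\sum_{i}\#\{j:j<i<\sigma(j)<\sigma(i)\text{ or }\sigma(i)<\sigma(j)\le i<j\}$. *)

(* Defs.v *)
From mathcomp Require Import all_boot all_order all_fingroup all_algebra.
Set Implicit Arguments. Unset Strict Implicit. Unset Printing Implicit Defensive.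
Import GRing.Theory Num.Theory.

(* Permutations of [n] are modelled as 'S_n, permutations of 'I_n = {0,..,n-1};
   all statistics below are invariant under the shift i |-> i+1. *)

Definition avoids321 n (s : 'S_n) : bool :=
  [forall i : 'I_n, forall j : 'I_n, forall k : 'I_n,
     ~~ [&& i < j, j < k, s j < s i & s k < s j]].

Definition exc n (s : 'S_n) : nat := #|[set i : 'I_n | i < s i]|.
Definition fix_ n (s : 'S_n) : nat := #|[set i : 'I_n | s i == i]|.
Definition cpk n (s : 'S_n) : nat := #|[set x : 'I_n | ((s^-1)%g x < x) && (s x < x)]|.
Definition cros n (s : 'S_n) : nat :=
  \sum_(i : 'I_n) #|[set j : 'I_n | [&& j < i, i < s j & s j < s i]
                                  || [&& s i < s j, s j <= i & i < j]]|.

Local Open Scope ring_scope.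

Definition P3 (R : comRingType) n (a b c : R) : R :=
  \sum_(s : 'S_n | avoids321 s) a ^+ cros s * b ^+ exc s * c ^+ fix_ s.

Definition P4 (R : comRingType) n (a b c d : R) : R :=
  \sum_(s : 'S_n | avoids321 s)
     a ^+ cros s * b ^+ cpk s * c ^+ exc s * d ^+ fix_ s.

(* Main.v *)
Require Import Defs.
From mathcomp Require Import all_boot all_order all_fingroup all_algebra.
From mathcomp Require Import zify.
Import GRing.Theory Num.Theory.
Set Implicit Arguments. Unset Strict Implicit. Unset Printing Implicit Defensive.

Lemma card_sum n (P : pred 'I_n) : #|[set x | P x]| = \sum_x (P x : nat).
Proof.
rewrite -sum1_card big_mkcond /=; apply: eq_bigr => x _; rewrite inE; by case: (P x).
Qed.

Lemma sum_pos_ex n (P : pred 'I_n) : 0 < \sum_x (P x : nat) -> exists x, P x.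
Proof.
case: (boolP [exists x, P x]) => [/existsP//|/existsPn H].
by rewrite big1 // => x _; rewrite (negbTE (H x)).
Qed.

Lemma sum_ge_term n (P : pred 'I_n) x : P x -> 0 < \sum_x (P x : nat).
Proof. by move=> Px; rewrite (bigD1 x) //= Px. Qed.

Lemma flow n (s : 'S_n) (k : nat) :
  \sum_(j : 'I_n) ((j < k) && (k <= s j) : nat) = \sum_(j : 'I_n) ((k <= j) && (s j < k) : nat).
Proof.
have E : \sum_(j : 'I_n) ((j < k) : nat) = \sum_(j : 'I_n) ((s j < k) : nat).
  by rewrite (reindex_inj (@perm_inj _ s)).
have E1 : \sum_(j : 'I_n) ((j < k) : nat) =
   \sum_(j : 'I_n) (((j < k) && (s j < k)) : nat) + \sum_(j : 'I_n) ((j < k) && (k <= s j) : nat).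
  rewrite -big_split; apply: eq_bigr => j _ /=.
  by case: (ltnP j k); case: (ltnP (s j) k).
have E2 : \sum_(j : 'I_n) ((s j < k) : nat) =
   \sum_(j : 'I_n) (((j < k) && (s j < k)) : nat) + \sum_(j : 'I_n) ((k <= j) && (s j < k) : nat).
  rewrite -big_split; apply: eq_bigr => j _ /=.
  by case: (ltnP j k); case: (ltnP (s j) k).
by apply/eqP; rewrite -(eqn_add2l (\sum_(j : 'I_n) (((j < k) && (s j < k)) : nat))) -E1 -E2 E.
Qed.

Definition Aset n (s : 'S_n) : {set 'I_n} := [set i : 'I_n | i < s i].
Definition Vset n (s : 'S_n) : {set 'I_n} := [set i : 'I_n | (s^-1)%g i < i].
Definition cnt n (A : {set 'I_n}) (k : nat) : nat := \sum_(j : 'I_n) ((j \in A) && (j < k) : nat).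
Definition hh n (A V : {set 'I_n}) (k : nat) := cnt A k - cnt V k.

Lemma avoidP n (s : 'S_n) (i j k : 'I_n) : avoids321 s -> i < j -> j < k -> s j < s i -> s k < s j -> False.
Proof.
move=> /forallP /(_ i) /forallP /(_ j) /forallP /(_ k) H ij jk a b.
by move: H; rewrite ij jk a b.
Qed.

Lemma hperm n (s : 'S_n) (k : nat) :
  hh (Aset s) (Vset s) k = \sum_(j : 'I_n) ((j < k) && (k <= s j) : nat).
Proof.
rewrite /hh /cnt.
have -> : \sum_(j : 'I_n) ((j \in Vset s) && (j < k) : nat) =
          \sum_(j : 'I_n) ((j < s j) && (s j < k) : nat).
  rewrite (reindex_inj (@perm_inj _ s)); apply: eq_bigr => j _.
  by rewrite inE permK.
have -> : \sum_(j : 'I_n) ((j \in Aset s) && (j < k) : nat) =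
          \sum_(j : 'I_n) ((j < s j) && (s j < k) : nat) +
          \sum_(j : 'I_n) ((j < k) && (k <= s j) : nat).
  rewrite -big_split; apply: eq_bigr => j _; rewrite inE /=.
  case: (ltnP j k); case: (ltnP (s j) k); case: (ltnP j (s j)) => //=; lia.
by rewrite addKn.
Qed.

Lemma mono_exc n (s : 'S_n) (i j : 'I_n) : avoids321 s -> i < j -> i < s i -> j < s j -> s i < s j.
Proof.
move=> av ij ei ej; rewrite ltnNge; apply/negP => le.
have lt : s j < s i.
  rewrite ltn_neqAle le andbT; apply/negP => /eqP /val_inj /perm_inj E.
  by move: ij; rewrite E ltnn.
have := sum_ge_term (P := fun l : 'I_n => (l < j.+1) && (j.+1 <= s l)) (x := j).
rewrite ltnSn ej => /(_ isT); rewrite flow => /sum_pos_ex [l /andP [jl sl]].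
apply: (avoidP av ij jl lt); lia.
Qed.

Lemma mono_nexc n (s : 'S_n) (i j : 'I_n) : avoids321 s -> i < j -> s i <= i -> s j <= j -> s i < s j.
Proof.
move=> av ij ei ej; rewrite ltnNge; apply/negP => le.
have lt : s j < s i.
  rewrite ltn_neqAle le andbT; apply/negP => /eqP /val_inj /perm_inj E.
  by move: ij; rewrite E ltnn.
have := sum_ge_term (P := fun l : 'I_n => (i <= l) && (s l < i)) (x := j).
rewrite (ltnW ij) /= => /(_ ltac:(lia)); rewrite -flow => /sum_pos_ex [l /andP [li sl]].
have ne : s l != s i by apply/negP => /eqP /perm_inj E; move: li; rewrite E ltnn.
move: ne; rewrite -val_eqE /= => ne; apply: (avoidP av li ij _ lt); lia.
Qed.

Ltac casecmp := repeat (match goal with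
 | |- context [?a <= ?b] => case: (leqP a b) => ?
 | |- context [?a == ?b :> nat] => case: (@eqP _ a b) => ?
 end; rewrite /=); try done; try (exfalso; lia); try lia.

Lemma perm_eq_inv n (s : 'S_n) (i j : 'I_n) : (s j == i) = (j == (s^-1)%g i).
Proof. by apply/eqP/eqP => [<-|->]; rewrite ?permK ?permKV. Qed.

Lemma sum_inv n (s : 'S_n) (i : 'I_n) (P : pred 'I_n) :
  \sum_(j : 'I_n) ((s j == i) && P j : nat) = P ((s^-1)%g i).
Proof.
rewrite (bigD1 ((s^-1)%g i)) //= permKV eqxx big1 ?addn0 // => j /negbTE.
by rewrite perm_eq_inv => ->.
Qed.

Lemma exc_card n (s : 'S_n) : exc s = #|Aset s|.
Proof. by []. Qed.

Lemma cardAV n (s : 'S_n) : #|Aset s| = #|Vset s|.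
Proof.
rewrite !card_sum [in RHS](reindex_inj (@perm_inj _ s)); apply: eq_bigr => j _.
by rewrite (permK s j).
Qed.

Lemma cpk_card n (s : 'S_n) : cpk s = #|Vset s :\: Aset s|.
Proof.
rewrite /cpk; apply: eq_card => x; rewrite !inE -leqNgt.
case: (ltnP ((s^-1)%g x) x) => h; rewrite ?andbT ?andbF //.
have ne : s x != x by apply/negP => /eqP E; move: h; rewrite -{1}E (permK s x) ltnn.
move: ne; rewrite -val_eqE /= => ne; casecmp.
Qed.

Definition fixset n (A V : {set 'I_n}) := [set k : 'I_n | (k \notin A) && (hh A V k == 0)].

Lemma fix_card n (s : 'S_n) : avoids321 s -> fix_ s = #|fixset (Aset s) (Vset s)|.
Proof.
move=> av; apply: eq_card => k; rewrite !inE hperm.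
apply/eqP/andP => [E|[nk /eqP S0]].
  split; first by rewrite E ltnn.
  rewrite eqn0Ngt; apply/negP => /sum_pos_ex [j /andP [jk ksj]].
  have ne : s j != s k by apply/negP => /eqP /perm_inj E2; move: jk; rewrite E2 ltnn.
  have := sum_ge_term (P := fun l : 'I_n => (l < k) && (k <= s l)) (x := j).
  rewrite jk ksj => /(_ isT); rewrite flow => /sum_pos_ex [l /andP [kl slk]].
  have ne2 : l != k by apply/negP => /eqP E3; move: slk; rewrite E3 E ltnn.
  move: ne ne2; rewrite -!val_eqE /= E => ne ne2.
  apply: (avoidP av (i := j) (j := k) (k := l)); rewrite ?E; lia.
have : ~~ (0 < \sum_(l : 'I_n) ((k <= l) && (s l < k) : nat)) by rewrite -flow S0.
move=> H; apply/val_inj => /=; apply/eqP; rewrite eqn_leq; move: nk; rewrite -leqNgt => -> /=.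
rewrite leqNgt; apply/negP => lt; move/negP: H; apply.
by apply: (sum_ge_term (x := k)); rewrite leqnn lt.
Qed.

Lemma sum_eq1 n (i : 'I_n) (b : bool) : \sum_(j : 'I_n) ((j == i) && b : nat) = b.
Proof. by rewrite (bigD1 i) //= eqxx big1 ?addn0 // => j /negbTE ->. Qed.

Lemma cros_exc n (s : 'S_n) : avoids321 s ->
  cros s + exc s = \sum_(k : 'I_n) hh (Aset s) (Vset s) k.
Proof.
move=> av; rewrite exc_card cardAV card_sum /cros -big_split; apply: eq_bigr => i _.
rewrite card_sum hperm /=.
case: (ltnP i (s i)) => ei.
  rewrite -(sum_inv s i (fun j => j < i)) -big_split; apply: eq_bigr => j _ /=.
  have M : j < i -> i < s j -> s j < s i.
    by move=> a b; apply: mono_exc => //; lia.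
  rewrite -val_eqE /=; casecmp.
rewrite flow.
apply/eqP; rewrite -(eqn_add2r ((s i < i) : nat)); apply/eqP.
have Hb : ((s i < i) : nat) = ((s^-1)%g i != i) :> nat.
  have -> : ((s^-1)%g i != i) = (s i != i).
    by rewrite eq_sym -perm_eq_inv eq_sym.
  rewrite -val_eqE /=; casecmp.
rewrite [in RHS]Hb -(sum_inv s i (fun j => j < i)) -(sum_inv s i (fun j => j != i)).
rewrite -(sum_eq1 i (s i < i)) -!big_split; apply: eq_bigr => j _ /=.
have M : i < j -> s j <= j -> s i < s j.
  by move=> a b; apply: mono_nexc.
have [->|ne] := eqVneq j i; last move: ne; rewrite -!val_eqE /=; try move=> ne; casecmp.
Qed.

Definition valid n (p : {set 'I_n} * {set 'I_n}) :=
  (#|p.1| == #|p.2|) && [forall k : 'I_n, cnt p.2 k.+1 <= cnt p.1 k].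

Lemma valid_Phi n (s : 'S_n) : valid (Aset s, Vset s).
Proof.
rewrite /valid /= cardAV eqxx /=; apply/forallP => k; rewrite /cnt.
rewrite (reindex_inj (@perm_inj _ s)) /=; apply: leq_sum => j _.
rewrite !inE (permK s j); case: (ltnP j (s j)) => //= h; case: (ltnP (s j) k.+1) => //= h2.
by rewrite (leq_trans h h2).
Qed.

Definition olt n (a b : 'I_n) := (a < b)%N.
Definition sq n (A : {set 'I_n}) : seq 'I_n := [seq j <- enum 'I_n | j \in A].

Lemma olt_trans n : transitive (@olt n).
Proof. by move=> a b c; rewrite /olt; apply: ltn_trans. Qed.
Lemma olt_irr n : irreflexive (@olt n).
Proof. by move=> a; rewrite /olt ltnn. Qed.

Lemma sq_sorted n (A : {set 'I_n}) : sorted (@olt n) (sq A).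
Proof.
apply: sorted_filter; first exact: olt_trans.
by have := iota_ltn_sorted 0 n; rewrite -val_enum_ord sorted_map.
Qed.

Lemma sq_uniq n (A : {set 'I_n}) : uniq (sq A).
Proof. by rewrite filter_uniq // enum_uniq. Qed.

Lemma mem_sq n (A : {set 'I_n}) x : (x \in sq A) = (x \in A).
Proof. by rewrite mem_filter mem_enum andbT. Qed.

Lemma size_sq n (A : {set 'I_n}) : size (sq A) = #|A|.
Proof.
rewrite -(card_uniqP (sq_uniq A)); apply: eq_card => x; exact: mem_sq.
Qed.

Lemma cnt0 n (s : seq 'I_n) (a : 'I_n) : all (olt a) s -> count (fun j : 'I_n => j < a) s = 0.
Proof.
elim: s => //= b s IH /andP [ab H]; rewrite IH // addn0.
by move: ab; rewrite /olt => ab; rewrite ltnNge (ltnW ab).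
Qed.

Lemma index_count n (s : seq 'I_n) (k : 'I_n) : sorted (@olt n) s -> k \in s ->
  index k s = count (fun j : 'I_n => j < k) s.
Proof.
elim: s => //= a s IH Hs; rewrite inE.
have Hall : all (olt a) s by apply: order_path_min => //; exact: olt_trans.
case: (eqVneq k a) => [->|ne] /= H.
  by rewrite ltnn cnt0.
have ks : k \in s by [].
rewrite IH //; last exact: path_sorted Hs.
have : olt a k by move/allP: Hall; apply.
by rewrite /olt => ->.
Qed.

Lemma cnt_count n (A : {set 'I_n}) (k : nat) : cnt A k = count (fun j : 'I_n => j < k) (sq A).
Proof.
rewrite /cnt /sq count_filter -sum1_count big_mkcond /=.
rewrite enumT [index_enum _]unlock [RHS]big_mkcond /=; apply: eq_bigr => j _.
by rewrite andbC; case: (_ && _).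
Qed.


Lemma cntS n (A : {set 'I_n}) (k : 'I_n) : cnt A k.+1 = cnt A k + (k \in A).
Proof.
rewrite /cnt -(sum_eq1 k (k \in A)) -big_split; apply: eq_bigr => j _ /=.
have [->|ne] := eqVneq j k; first by rewrite ltnn ltnSn /=; case: (k \in A).
rewrite ltnS leq_eqVlt; move: ne; rewrite -val_eqE => /negbTE -> /=.
by rewrite addn0.
Qed.

Lemma cnt_mono n (A : {set 'I_n}) (a b : nat) : a <= b -> cnt A a <= cnt A b.
Proof.
move=> ab; apply: leq_sum => j _; case: (j \in A) => //=.
case: (ltnP j a) => //= h; by rewrite (leq_trans h ab).
Qed.

Lemma cntC n (A : {set 'I_n}) (k : nat) : cnt A k + cnt (~: A) k = cnt [set: 'I_n] k.
Proof.
rewrite /cnt -big_split; apply: eq_bigr => j _ /=; rewrite !inE.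
by case: (j \in A); case: (j < k).
Qed.

Definition gfun n (A V : {set 'I_n}) (k : 'I_n) : 'I_n :=
  if k \in A then nth k (sq V) (index k (sq A))
  else nth k (sq (~: V)) (index k (sq (~: A))).

Lemma idx_lt n (A : {set 'I_n}) k : k \in A -> index k (sq A) < #|A|.
Proof. by move=> kA; rewrite -size_sq index_mem mem_sq. Qed.

Lemma idx_cnt n (A : {set 'I_n}) k : k \in A -> index k (sq A) = cnt A k.
Proof. by move=> kA; rewrite cnt_count index_count ?sq_sorted ?mem_sq. Qed.

Lemma nth_in n (A : {set 'I_n}) i x0 : i < #|A| -> nth x0 (sq A) i \in A.
Proof. by move=> hi; rewrite -mem_sq mem_nth ?size_sq. Qed.

Lemma nth_cnt n (A : {set 'I_n}) i x0 : i < #|A| -> cnt A (nth x0 (sq A) i) = i.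
Proof.
move=> hi; rewrite -idx_cnt ?nth_in // index_uniq ?sq_uniq ?size_sq //.
Qed.

Lemma cardC_eq n (A V : {set 'I_n}) : #|A| = #|V| -> #|~: A| = #|~: V|.
Proof. by move=> E; have := cardsC A; have := cardsC V; lia. Qed.

Lemma validE n (A V : {set 'I_n}) : valid (A, V) ->
  #|A| = #|V| /\ forall k : 'I_n, cnt V k.+1 <= cnt A k.
Proof. by case/andP => /eqP E /forallP H. Qed.

Lemma g_exc n (A V : {set 'I_n}) k : valid (A, V) -> k \in A -> k < gfun A V k.
Proof.
case/validE => E B kA; rewrite /gfun kA.
have hi : index k (sq A) < #|V| by rewrite -E idx_lt.
set v := nth k (sq V) _.
have cv : cnt V v = cnt A k by rewrite nth_cnt // idx_cnt.
have vV : v \in V by apply: nth_in.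
have := B v; rewrite cntS vV cv addn1.
move=> H; rewrite ltnNge; apply/negP => vk; have := cnt_mono A vk; lia.
Qed.

Lemma g_nexc n (A V : {set 'I_n}) k : valid (A, V) -> k \notin A -> gfun A V k <= k.
Proof.
case/validE => E B kA; rewrite /gfun (negbTE kA).
have kA' : k \in ~: A by rewrite inE.
have hi : index k (sq (~: A)) < #|~: V| by rewrite -(cardC_eq E) idx_lt.
set w := nth k (sq (~: V)) _.
have cw : cnt (~: V) w = cnt (~: A) k by rewrite nth_cnt // idx_cnt.
rewrite leqNgt; apply/negP => kw.
have h1 : cnt (~: V) k.+1 <= cnt (~: V) w by apply: cnt_mono.
have h2 := cntS (~: A) k; rewrite kA' in h2.
have h3 := cntC A k.+1; have h4 := cntC V k.+1.
have h5 := B k; have h6 := cntS A k.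
lia.
Qed.

Lemma g_memV n (A V : {set 'I_n}) k : valid (A, V) -> k \in A -> gfun A V k \in V.
Proof.
case/validE => E B kA; rewrite /gfun kA; apply: nth_in; by rewrite -E idx_lt.
Qed.

Lemma g_memW n (A V : {set 'I_n}) k : valid (A, V) -> k \notin A -> gfun A V k \notin V.
Proof.
case/validE => E B kA; rewrite /gfun (negbTE kA).
have kA' : k \in ~: A by rewrite inE.
have : nth k (sq (~: V)) (index k (sq (~: A))) \in ~: V.
  by apply: nth_in; rewrite -(cardC_eq E) idx_lt.
by rewrite inE.
Qed.

Lemma nth_mono n (V : {set 'I_n}) i j x0 y0 : i < j -> j < #|V| ->
  nth x0 (sq V) i < nth y0 (sq V) j.
Proof.
move=> ij jV.
rewrite (set_nth_default y0 x0) ?size_sq; last exact: ltn_trans jV.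
have := @sorted_ltn_nth _ (@olt n) (@olt_trans n) y0 (sq V) (sq_sorted V) i j.
rewrite !inE !size_sq; apply => //; exact: ltn_trans jV.
Qed.

Lemma g_mono n (A V : {set 'I_n}) (k l : 'I_n) : valid (A, V) -> k < l ->
  (k \in A) = (l \in A) -> gfun A V k < gfun A V l.
Proof.
move=> vd kl; have vd' := vd; case/validE: vd' => E B.
rewrite /gfun; case: (boolP (k \in A)) => kA /esym lA; rewrite lA.
  apply: nth_mono; last by rewrite -E idx_lt.
  rewrite !idx_cnt //; have := cntS A k; rewrite kA => h.
  have := cnt_mono A kl; lia.
have kA' : k \in ~: A by rewrite inE.
have lA' : l \in ~: A by rewrite inE lA.
apply: nth_mono; last by rewrite -(cardC_eq E) idx_lt.
rewrite !idx_cnt //; have := cntS (~: A) k; rewrite kA' => h.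
have := cnt_mono (~: A) kl; lia.
Qed.

Lemma g_inj n (A V : {set 'I_n}) : valid (A, V) -> injective (gfun A V).
Proof.
move=> vd.
suff H : forall k l : 'I_n, k < l -> gfun A V k != gfun A V l.
  move=> k l E; case: (ltngtP k l) => [kl|lk|/val_inj //].
    by move: (H _ _ kl); rewrite E eqxx.
  by move: (H _ _ lk); rewrite E eqxx.
move=> k l kl; case: (eqVneq (k \in A) (l \in A)) => [e|ne].
  by rewrite neq_ltn (g_mono vd kl e).
apply/negP => /eqP e.
case: (boolP (k \in A)) ne => kA; case: (boolP (l \in A)) => lA //= _.
  by move: (g_memV vd kA) (g_memW vd lA); rewrite e => ->.
by move: (g_memW vd kA) (g_memV vd lA); rewrite e => /negbTE ->.
Qed.

Lemma g_surj n (A V : {set 'I_n}) : valid (A, V) ->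
  exists s : 'S_n, [/\ avoids321 s, Aset s = A & Vset s = V].
Proof.
move=> vd; exists (perm (g_inj vd)).
move: (perm (g_inj vd)) (permE (g_inj vd)) => s Es.
have EA : Aset s = A.
  apply/setP => x; rewrite !inE Es.
  case: (boolP (x \in A)) => xA; first by rewrite g_exc.
  by rewrite ltnNge g_nexc.
split => //.
- apply/forallP => i; apply/forallP => j; apply/forallP => k; rewrite !Es.
  apply/negP => /and4P [ij jk ji kj].
  case: (eqVneq (i \in A) (j \in A)) => [e|ne].
    by have := g_mono vd ij e; rewrite ltnNge (ltnW ji).
  case: (eqVneq (j \in A) (k \in A)) => [e|ne2].
    by have := g_mono vd jk e; rewrite ltnNge (ltnW kj).
  have e : (i \in A) = (k \in A).
    by move: ne ne2; case: (i \in A); case: (j \in A); case: (k \in A).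
  have := g_mono vd (ltn_trans ij jk) e; rewrite ltnNge; move/negP; apply.
  exact: ltnW (ltn_trans kj ji).
- apply/setP => x; rewrite inE.
  have Hx := permKV s x; rewrite Es in Hx.
  have := EA; move/setP/(_ ((s^-1)%g x)); rewrite inE (permKV s x) => ->.
  case: (boolP (_ \in A)) => h; rewrite -[in RHS]Hx.
    by rewrite g_memV.
  by rewrite (negbTE (g_memW vd h)).
Qed.

Lemma g_eq n (s : 'S_n) : avoids321 s -> forall k, s k = gfun (Aset s) (Vset s) k.
Proof.
move=> av.
have memV : forall x, (x \in Vset s) = ((s^-1)%g x \in Aset s).
  by move=> x; rewrite /Vset /Aset !in_set (permKV s x).
have mapA : map s (sq (Aset s)) = sq (Vset s).
  apply: (irr_sorted_eq (@olt_trans n) (@olt_irr n)).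
  - apply: (homo_sorted_in (P := mem (Aset s))); last exact: sq_sorted.
      move=> a b; rewrite !inE /olt => ha hb ab; exact: mono_exc.
    by apply/allP => a; rewrite mem_sq.
  - exact: sq_sorted.
  - move=> x; rewrite mem_sq memV; apply/mapP/idP => [[a] | h].
      by rewrite mem_sq => ha ->; rewrite (permK s a).
    exists ((s^-1)%g x); first by rewrite mem_sq.
    by rewrite (permKV s x).
have mapB : map s (sq (~: Aset s)) = sq (~: Vset s).
  apply: (irr_sorted_eq (@olt_trans n) (@olt_irr n)).
  - apply: (homo_sorted_in (P := mem (~: Aset s))); last exact: sq_sorted.
      move=> a b; rewrite !inE /olt -!leqNgt => ha hb ab; exact: mono_nexc.
    by apply/allP => a; rewrite mem_sq.
  - exact: sq_sorted.
  - move=> x; rewrite mem_sq [in RHS]inE memV; apply/mapP/idP => [[a] | h].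
      by rewrite mem_sq inE => ha ->; rewrite (permK s a).
    exists ((s^-1)%g x); first by rewrite mem_sq inE.
    by rewrite (permKV s x).
move=> k; rewrite /gfun; case: (boolP (k \in Aset s)) => kA.
  rewrite -mapA (nth_map k) ?nth_index ?mem_sq //.
  by rewrite index_mem mem_sq.
have kB : k \in ~: Aset s by rewrite inE.
rewrite -mapB (nth_map k) ?nth_index ?mem_sq //.
by rewrite index_mem mem_sq.
Qed.

Lemma Phi_inj n (s t : 'S_n) : avoids321 s -> avoids321 t ->
  Aset s = Aset t -> Vset s = Vset t -> s = t.
Proof.
move=> avs avt EA EV; apply/permP => k; rewrite (g_eq avs) (g_eq avt) EA EV //.
Qed.

Lemma sum_Phi n (R : nmodType) (G : {set 'I_n} * {set 'I_n} -> R) :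
  (\sum_(s : 'S_n | avoids321 s) G (Aset s, Vset s) = \sum_(p | valid p) G p)%R.
Proof.
have E : [set p | valid p] = (fun s : 'S_n => (Aset s, Vset s)) @: [set s : 'S_n | avoids321 s].
  apply/setP => [[A V]]; rewrite inE; apply/idP/imsetP.
  - by move/g_surj => [s [av <- <-]]; exists s => //; rewrite inE.
  - by move=> [s]; rewrite inE => _ [-> ->]; exact: valid_Phi.
rewrite (eq_bigl (fun p => p \in [set p | valid p])); last by move=> p; rewrite inE.
rewrite E big_imset /=.
  by apply: eq_bigl => s; rewrite inE.
move=> s t; rewrite !inE => avs avt [EA EV]; exact: Phi_inj.
Qed.

Definition Lset n (p : {set 'I_n} * {set 'I_n}) : {set 'I_n} :=
  [set k : 'I_n | [&& k \notin p.1, k \notin p.2 & 0 < hh p.1 p.2 k]].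
Definition join n (j : ({set 'I_n} * {set 'I_n}) * {set 'I_n}) :=
  (j.1.1 :|: j.2, j.1.2 :|: j.2).
Definition splt n (p : {set 'I_n} * {set 'I_n}) :=
  ((p.1 :\: p.2, p.2 :\: p.1), p.1 :&: p.2).
Definition dom n (j : ({set 'I_n} * {set 'I_n}) * {set 'I_n}) :=
  [&& valid j.1, j.1.1 :&: j.1.2 == set0 & j.2 \subset Lset j.1].

Lemma cntU n (A X : {set 'I_n}) k : A :&: X = set0 -> cnt (A :|: X) k = cnt A k + cnt X k.
Proof.
move=> /setP D; rewrite /cnt -big_split; apply: eq_bigr => j _ /=.
have := D j; rewrite !inE.
by case: (j \in A); case: (j \in X); case: (j < k).
Qed.

Lemma cntD n (A B : {set 'I_n}) k : cnt A k = cnt (A :\: B) k + cnt (A :&: B) k.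
Proof.
rewrite /cnt -big_split; apply: eq_bigr => j _ /=; rewrite !inE.
by case: (j \in A); case: (j \in B); case: (j < k).
Qed.

Lemma cardE_sum n (A : {set 'I_n}) : #|A| = \sum_(k : 'I_n) (k \in A : nat).
Proof.
rewrite -sum1_card big_mkcond /=; apply: eq_bigr => x _; by case: (x \in A).
Qed.

Lemma join_splt n (p : {set 'I_n} * {set 'I_n}) : join (splt p) = p.
Proof.
case: p => A V; rewrite /join /splt /=; congr (_, _); apply/setP => x; rewrite !inE;
by case: (x \in A); case: (x \in V).
Qed.

Lemma dom_splt n (p : {set 'I_n} * {set 'I_n}) : valid p -> dom (splt p).
Proof.
case: p => A V /validE [E B]; rewrite /dom /splt /=.
have IC : V :&: A = A :&: V by rewrite setIC.
have c1 := cntD A V; have c2 := cntD V A; rewrite IC in c2.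
apply/and3P; split.
- apply/andP; split => /=.
    have h1 := cardsID V A; have h2 := cardsID A V; rewrite IC in h2.
    by rewrite -(eqn_add2l #|A :&: V|) h1 h2 E.
  apply/forallP => k /=; have := B k; rewrite (c1 k) (c2 k.+1).
  have := cntS (A :&: V) k; have := cntS (V :\: A) k; lia.
- apply/eqP/setP => x; rewrite !inE; by case: (x \in A); case: (x \in V).
- apply/subsetP => k; rewrite !inE => /andP [kA kV]; rewrite kA kV /=.
  have h1 := c2 k; have h2 := cntS V k; have h3 := c1 k; have h4 := B k.
  rewrite kV in h2; rewrite /hh /=; lia.
Qed.

Lemma dom_facts n (j : ({set 'I_n} * {set 'I_n}) * {set 'I_n}) : dom j ->
  [/\ j.1.1 :&: j.2 = set0, j.1.2 :&: j.2 = set0 & j.1.1 :&: j.1.2 = set0].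
Proof.
case: j => [[A0 V0] X]; case/and3P => /= _ /eqP D /subsetP S; split => //;
apply/setP => x; rewrite !inE /=; case: (boolP (x \in X)) => h; rewrite ?andbF ?andbT //;
by move: (S x h); rewrite inE /= => /and3P [/negbTE h1 /negbTE h2 _]; rewrite ?h1 ?h2.
Qed.

Lemma hh_join n (j : ({set 'I_n} * {set 'I_n}) * {set 'I_n}) k : dom j ->
  hh (join j).1 (join j).2 k = hh j.1.1 j.1.2 k.
Proof.
move=> /dom_facts [D1 D2 _]; rewrite /hh /join /= !cntU //; lia.
Qed.

Lemma dom_join n (j : ({set 'I_n} * {set 'I_n}) * {set 'I_n}) :
  dom j -> valid (join j) && (splt (join j) == j).
Proof.
move=> dj; have [D1 D2 D3] := dom_facts dj.
case: j dj D1 D2 D3 => [[A0 V0] X] /= dj D1 D2 D3.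
have dj' := dj; case/and3P: dj' => /= /validE [E B] _ /subsetP S.
apply/andP; split.
- apply/andP; split.
    rewrite /join /= !cardsU D1 D2 !cards0 E //.
  apply/forallP => k; rewrite /join /= !cntU //.
  have h1 := B k; have h2 := cntS V0 k; have h3 := cntS X k.
  case: (boolP (k \in X)) => kX; last by rewrite (negbTE kX) in h3; lia.
  move: (S k kX); rewrite inE /= => /and3P [kA kV hp].
  rewrite kX in h3; rewrite (negbTE kV) in h2; move: hp; rewrite /hh; lia.
- rewrite /splt /join /=; apply/eqP; congr (_, _); [congr (_, _)|];
  apply/setP => x; rewrite !inE; move/setP: D1 => /(_ x); move/setP: D2 => /(_ x);
  move/setP: D3 => /(_ x); rewrite !inE;
  by case: (x \in A0); case: (x \in V0); case: (x \in X).
Qed.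

Lemma sum_shape n (R : nmodType) (G : {set 'I_n} * {set 'I_n} -> R) :
  (\sum_(p | valid p) G p =
   \sum_(s : {set 'I_n} * {set 'I_n} | valid s && (s.1 :&: s.2 == set0))
      \sum_(X : {set 'I_n} | X \subset Lset s) G (join (s, X)))%R.
Proof.
rewrite pair_big_dep /= (reindex_onto (@join n) (@splt n)) /=; last first.
  by move=> p _; exact: join_splt.
apply: eq_big => [j|[s X] _ //].
apply/idP/idP => [/andP [v /eqP e]|].
  by rewrite -e -andbA; apply: dom_splt.
move=> dj; apply: dom_join; by rewrite /dom andbA.
Qed.

Lemma fix_join n (j : ({set 'I_n} * {set 'I_n}) * {set 'I_n}) : dom j ->
  fixset (join j).1 (join j).2 = fixset j.1.1 j.1.2.
Proof.
move=> dj; apply/setP => x; rewrite !inE hh_join //.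
case: j dj => [[A0 V0] X] /= dj; case/and3P: (dj) => _ _ /subsetP S.
case: (boolP (x \in X)) => h; rewrite ?orbF ?orbT //=.
by move: (S x h); rewrite inE /= => /and3P [_ _]; rewrite lt0n => /negbTE ->; rewrite andbF.
Qed.

Lemma HH_join n (j : ({set 'I_n} * {set 'I_n}) * {set 'I_n}) : dom j ->
  \sum_(k : 'I_n) hh (join j).1 (join j).2 k = \sum_(k : 'I_n) hh j.1.1 j.1.2 k.
Proof. by move=> dj; apply: eq_bigr => k _; rewrite hh_join. Qed.

Lemma card_join1 n (j : ({set 'I_n} * {set 'I_n}) * {set 'I_n}) : dom j ->
  #|(join j).1| = #|j.1.1| + #|j.2|.
Proof. by move=> /dom_facts [D1 _ _]; rewrite /join /= cardsU D1 cards0 subn0. Qed.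

Lemma card_join2 n (j : ({set 'I_n} * {set 'I_n}) * {set 'I_n}) : dom j ->
  #|(join j).2 :\: (join j).1| = #|j.1.2|.
Proof.
move=> /dom_facts [D1 D2 D3]; apply: eq_card => x; rewrite /join /= !inE.
move/setP: D1 => /(_ x); move/setP: D2 => /(_ x); move/setP: D3 => /(_ x); rewrite !inE.
by case: (x \in j.1.1); case: (x \in j.1.2); case: (x \in j.2).
Qed.

Lemma card_part n (s : {set 'I_n} * {set 'I_n}) : valid s -> s.1 :&: s.2 == set0 ->
  n = #|s.1| + #|s.2| + #|Lset s| + #|fixset s.1 s.2|.
Proof.
case: s => A V /validE [E B] /eqP /= /setP D.
transitivity (\sum_(k : 'I_n) 1)%N; first by rewrite sum1_card card_ord.
rewrite !cardE_sum -!big_split; apply: eq_bigr => k _ /=; rewrite !inE /=.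
have := D k; rewrite !inE.
case: (boolP (k \in A)) => kA; case: (boolP (k \in V)) => kV //= _.
  have h1 := B k; have h2 := cntS V k; rewrite kV in h2.
  have : 0 < hh A V k by rewrite /hh; lia.
  by rewrite lt0n => /negbTE ->.
by rewrite lt0n; case: eqP.
Qed.
From mathcomp Require Import ring.
Local Open Scope ring_scope.

Lemma sum_subset_pow (R : comRingType) n (L : {set 'I_n}) (c : R) :
  \sum_(X : {set 'I_n} | X \subset L) c ^+ #|X| = (1 + c) ^+ #|L|.
Proof.
have H := @bigA_distr R 0 1 *%R +%R 'I_n (fun i => if i \in L then c else 0) (fun=> 1).
have E1 : \prod_(i : 'I_n) ((if i \in L then c else 0) + 1) = (1 + c) ^+ #|L|.
  rewrite -prodr_const [RHS]big_mkcond /=. apply: congr_big => // i _.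
  by case: (i \in L); rewrite ?add0r // addrC.
rewrite -E1 H big_mkcond /=; apply: eq_bigr => J _.
case: (boolP (J \subset L)) => sJ.
  rewrite -prodr_const [LHS]big_mkcond /=; apply: eq_bigr => i _.
  case: (boolP (i \in J)) => // iJ; by rewrite (subsetP sJ i iJ).
have [i /andP [iJ iL]] : exists i, (i \in J) && (i \notin L).
  move: sJ => /subsetPn [i iJ iL]; by exists i; rewrite iJ.
by rewrite (bigD1 i) //= iJ (negbTE iL) mul0r.
Qed.

Definition FLw (R : comRingType) n (q t r : R) (p : {set 'I_n} * {set 'I_n}) : R :=
  q ^+ (\sum_(k : 'I_n) hh p.1 p.2 k) * t ^+ #|p.1| * r ^+ #|fixset p.1 p.2|.
Definition FRw (R : comRingType) n (q B c D : R) (p : {set 'I_n} * {set 'I_n}) : R :=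
  q ^+ (\sum_(k : 'I_n) hh p.1 p.2 k) * B ^+ #|p.2 :\: p.1| * c ^+ #|p.1| *
  D ^+ #|fixset p.1 p.2|.

Lemma part1 (R : fieldType) (n : nat) (q t x r : R) :
     (1 <= n)%N -> 1 + x != 0 -> x + t != 0 -> 1 + x * t != 0 ->
     P3 n q (t * q) r =
       ((1 + x * t) / (1 + x)) ^+ n *
       P4 n q ((1 + x) ^+ 2 * t / ((x + t) * (1 + x * t)))
            (q * (x + t) / (1 + x * t)) ((1 + x) * r / (1 + x * t)).
Proof.
move=> _ h1 h2 h3.
have e1 : (1 + x * t) / (1 + x) * ((1 + x * t) / (1 + x)) *
    ((1 + x) ^+ 2 * t / ((x + t) * (1 + x * t))) * ((x + t) / (1 + x * t)) = t.
  by field; rewrite h1 h2 h3.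
have e2 : (1 + x * t) / (1 + x) * ((1 + x) * r / (1 + x * t)) = r.
  by field; rewrite h1 h3.
have e3 : (1 + x * t) / (1 + x) * (1 + (x + t) / (1 + x * t)) = 1 + t.
  by field; rewrite h1 h3.
have EC : q * (x + t) / (1 + x * t) = q * ((x + t) / (1 + x * t)) by rewrite mulrA.
rewrite EC /P3 /P4.
move: e1 e2 e3.
set lam := (1 + x * t) / (1 + x).
set B := (1 + x) ^+ 2 * t / ((x + t) * (1 + x * t)).
set c := (x + t) / (1 + x * t).
set D := (1 + x) * r / (1 + x * t).
move=> e1 e2 e3; clearbody lam B c D.
pose FL := FLw q t r (n:=n). pose FR := FRw q B c D (n:=n).
have L1 : \sum_(s : 'S_n | avoids321 s) q ^+ cros s * (t * q) ^+ exc s * r ^+ fix_ s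
        = \sum_(s : 'S_n | avoids321 s) FL (Aset s, Vset s).
  apply: eq_bigr => s av; rewrite /FL /FLw /= -(cros_exc av) (fix_card av) exprD exprMn.
  rewrite -exc_card; ring.
have L2 : \sum_(s : 'S_n | avoids321 s) q ^+ cros s * B ^+ cpk s * (q * c) ^+ exc s * D ^+ fix_ s
        = \sum_(s : 'S_n | avoids321 s) FR (Aset s, Vset s).
  apply: eq_bigr => s av; rewrite /FR /FRw /= -(cros_exc av) (fix_card av) (cpk_card s) exprD exprMn.
  rewrite -exc_card; ring.
rewrite L1 L2 (sum_Phi FL) (sum_Phi FR) !sum_shape big_distrr /=.
apply: eq_bigr => s /andP [vs ds].
rewrite big_distrr /=.
have E : forall X : {set 'I_n}, X \subset Lset s -> FL (join (s, X)) =
   (q ^+ (\sum_(k : 'I_n) hh s.1 s.2 k) * t ^+ #|s.1| * r ^+ #|fixset s.1 s.2|) * t ^+ #|X|.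
  move=> X sX; have dj : dom (s, X) by rewrite /dom vs ds sX.
  by rewrite /FL /FLw (HH_join dj) (fix_join dj) (card_join1 dj) /= exprD; ring.
have E' : forall X : {set 'I_n}, X \subset Lset s -> lam ^+ n * FR (join (s, X)) =
   (lam ^+ n * q ^+ (\sum_(k : 'I_n) hh s.1 s.2 k) * B ^+ #|s.2| * c ^+ #|s.1| *
     D ^+ #|fixset s.1 s.2|) * c ^+ #|X|.
  move=> X sX; have dj : dom (s, X) by rewrite /dom vs ds sX.
  by rewrite /FR /FRw (HH_join dj) (fix_join dj) (card_join1 dj) (card_join2 dj) /= exprD; ring.
rewrite (eq_bigr _ E) (eq_bigr _ E') -!big_distrr /= !sum_subset_pow.
have En := card_part vs ds.
case/validE: (vs) => Ecard _.
rewrite [X in lam ^+ X]En -Ecard !exprD.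
rewrite -e3 -e2 -[in LHS]e1 !exprMn; ring.
Qed.


Lemma part2 (R : rcfType) (n : nat) (q t x r : R) :
     (1 <= n)%N -> t != 0 -> x != 0 -> x != 1 ->
     0 <= (1 + t) ^+ 2 - 4%:R * x * t ->
     let D := Num.sqrt ((1 + t) ^+ 2 - 4%:R * x * t) in
     let u := (1 + t ^+ 2 - 2%:R * x * t - (1 - t) * D) / (2%:R * (1 - x) * t) in
     let v := ((1 + t) ^+ 2 - 2%:R * x * t - (1 + t) * D) / (2%:R * x * t) in
     1 + u != 0 -> 1 + u * v != 0 ->
     P4 n q x (q * t) r =
       ((1 + u) / (1 + u * v)) ^+ n * P3 n q (q * v) ((1 + u * v) * r / (1 + u)).
Proof.
move=> n1 ht hx hx1 hd D u v hu huv.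
have HD : D ^+ 2 = (1 + t) ^+ 2 - 4%:R * x * t by rewrite /D sqr_sqrtr.
have h2 : (2%:R : R) != 0 by rewrite pnatr_eq0.
have h1x : 1 - x != 0 by rewrite subr_eq0 eq_sym.
have I1 : u + v = t * (1 + u * v).
  apply/eqP; rewrite -subr_eq0.
  have -> : u + v - t * (1 + u * v) =
     ((D ^+ 2 - ((1 + t) ^+ 2 - 4%:R * x * t)) * (0 - t + t^+3)) /
     ((2%:R * (1 - x) * t) * (2%:R * x * t)).
    rewrite /u /v; field; by rewrite ?h2 ?h1x ?ht ?hx.
  by rewrite HD subrr !mul0r.
have I2 : (1 + u) ^+ 2 * v = x * t * (1 + u * v) ^+ 2.
  apply/eqP; rewrite -subr_eq0.
  have -> : (1 + u) ^+ 2 * v - x * t * (1 + u * v) ^+ 2 =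
     ((D ^+ 2 - ((1 + t) ^+ 2 - 4%:R * x * t)) * (0 - x * t + 2%:R * x * t * D - x * t * D^+2 - 6%:R * x * t^+2 + 6%:R * x * t^+2 * D - 9%:R * x * t^+3 - 2%:R * x * t^+3 * D + 2%:R * x * t^+3 * D^+2 - 4%:R * x * t^+4 - 6%:R * x * t^+4 * D + x * t^+5 - x * t^+5 * D^+2 + 2%:R * x * t^+6 + x * t^+7 + 8%:R * x^+2 * t^+2 - 8%:R * x^+2 * t^+2 * D + 24%:R * x^+2 * t^+3 + 4%:R * x^+2 * t^+4 + 8%:R * x^+2 * t^+4 * D - 4%:R * x^+2 * t^+6 - 16%:R * x^+3 * t^+3)) /
     ((2%:R * (1 - x) * t) ^+ 2 * (2%:R * x * t) ^+ 2).
    rewrite /u /v; field; by rewrite ?h2 ?h1x ?ht ?hx.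
  by rewrite HD subrr !mul0r.
have huv2 : u + v != 0 by rewrite I1 mulf_neq0.
have H := part1 (t := v) (x := u) q ((1 + u * v) * r / (1 + u)) n1 hu huv2 huv.
have e1 : (1 + u) ^+ 2 * v / ((u + v) * (1 + u * v)) = x.
  rewrite I2 I1; field; by rewrite ?ht ?huv.
have e2 : q * (u + v) / (1 + u * v) = q * t.
  rewrite I1; field; by rewrite ?huv.
have e3 : (1 + u) * ((1 + u * v) * r / (1 + u)) / (1 + u * v) = r.
  field; by rewrite ?hu ?huv.
rewrite e1 e2 e3 in H.
rewrite [q * v]mulrC H mulrA -exprMn.
have -> : (1 + u) / (1 + u * v) * ((1 + u * v) / (1 + u)) = 1.
  field; by rewrite ?hu ?huv.
by rewrite expr1n mul1r.
Qed.

Theorem corollary3p11 :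
  (forall (R : fieldType) (n : nat) (q t x r : R),
     (1 <= n)%N -> 1 + x != 0 -> x + t != 0 -> 1 + x * t != 0 ->
     P3 n q (t * q) r =
       ((1 + x * t) / (1 + x)) ^+ n *
       P4 n q ((1 + x) ^+ 2 * t / ((x + t) * (1 + x * t)))
            (q * (x + t) / (1 + x * t)) ((1 + x) * r / (1 + x * t)))
  /\
  (forall (R : rcfType) (n : nat) (q t x r : R),
     (1 <= n)%N -> t != 0 -> x != 0 -> x != 1 ->
     0 <= (1 + t) ^+ 2 - 4%:R * x * t ->
     let D := Num.sqrt ((1 + t) ^+ 2 - 4%:R * x * t) in
     let u := (1 + t ^+ 2 - 2%:R * x * t - (1 - t) * D) / (2%:R * (1 - x) * t) in
     let v := ((1 + t) ^+ 2 - 2%:R * x * t - (1 + t) * D) / (2%:R * x * t) in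
     1 + u != 0 -> 1 + u * v != 0 ->
     P4 n q x (q * t) r =
       ((1 + u) / (1 + u * v)) ^+ n * P3 n q (q * v) ((1 + u * v) * r / (1 + u))).
Proof.
split; [exact: part1 | exact: part2].
Qed.
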